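(* Fix $0<r<1$ and $\alpha=r/\sqrt{1+r^2}$, $\beta=1/\sqrt{1+r^2}$. For $n\ge2$ let $\gamma_+^{(n)}=1-r^{2/n}$ and let $\gamma_-^{(n)}$ be the unique root in $(0,\gamma_+^{(n)})$ of $f_n(\gamma)=\alpha^2+\beta^2\gamma^n-\alpha\beta(1-\gamma)^{n/2}$. Then $\Delta_n:=\gamma_+^{(n)}-\gamma_-^{(n)}$ satisfies $$\Delta_n\le\frac2n\,r^{2/n-2}\bigl(\gamma_+^{(n)}\bigr)^n,$$ and consequently, with $\tau=\ln(1/r)$, $\Delta_n=O\!\left((2\tau)^n/n^{n+1}\right)$ as $n\to\infty$.
   Context: $[\gamma_-^{(n)},\gamma_+^{(n)}]$ is the stabilizer window of the amplitude-damped state $\mathcal E_\gamma^{\otimes n}(|\psi_n\rangle\langle\psi_n|)$, $|\psi_n\rangle=\alpha|0^n\rangle+\beta|1^n\rangle$. *)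

(* Defs.v *)
From Stdlib Require Export Reals.
Open Scope R_scope.

Definition alpha (r : R) : R := r / sqrt (1 + r ^ 2).
Definition beta (r : R) : R := 1 / sqrt (1 + r ^ 2).

Definition gamma_plus (r : R) (n : nat) : R := 1 - Rpower r (2 / INR n).

Definition f_n (r : R) (n : nat) (g : R) : R :=
  alpha r ^ 2 + beta r ^ 2 * g ^ n
  - alpha r * beta r * Rpower (1 - g) (INR n / 2).

Definition is_gamma_minus (r : R) (n : nat) (g : R) : Prop :=
  0 < g < gamma_plus r n /\ f_n r n g = 0.

(* Main.v *)
Require Import Defs.
From Stdlib Require Import Reals Lra.
Open Scope R_scope.

Lemma Rpower_pos' x y : 0 < Rpower x y.
Proof. unfold Rpower; apply exp_pos. Qed.

Lemma part1 (r : R) (hr : 0 < r < 1) (n : nat) (g : R) :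
  (2 <= n)%nat -> is_gamma_minus r n g ->
  gamma_plus r n - g
   <= 2 / INR n * Rpower r (2 / INR n - 2) * gamma_plus r n ^ n.
Proof.
  intros hn [[g0 g1] hf].
  assert (hnR : 2 <= INR n) by (replace 2 with (INR 2) by (simpl; ring); apply le_INR; exact hn).
  set (nR := INR n) in *.
  set (s := Rpower r (2 / nR)).
  assert (hs0 : 0 < s) by apply Rpower_pos'.
  unfold gamma_plus in *; fold nR s in g1 |- *.
  set (m := nR / 2).
  assert (hX : 0 < 1 - g) by lra.
  set (X := Rpower (1 - g) m).
  assert (HA : sqrt (1 + r ^ 2) ^ 2 = 1 + r ^ 2) by (apply pow2_sqrt; nra).
  assert (HA0 : 0 < sqrt (1 + r ^ 2)) by (apply sqrt_lt_R0; nra).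
  assert (Heq : r ^ 2 + g ^ n = r * X).
  { unfold f_n, alpha, beta in hf. fold nR m X in hf.
    set (A := sqrt (1 + r ^ 2)) in *.
    assert (E : r ^ 2 + g ^ n - r * X =
               (r / A) ^ 2 * A ^ 2 + (1 / A) ^ 2 * A ^ 2 * g ^ n - r / A * (1 / A) * A ^ 2 * X)
      by (field; lra).
    assert (E2 : r ^ 2 + g ^ n - r * X = A ^ 2 * ((r / A) ^ 2 + (1 / A) ^ 2 * g ^ n - r / A * (1 / A) * X))
      by (rewrite E; ring).
    rewrite hf, Rmult_0_r in E2. lra. }
  destruct (MVT_cor2 (fun t => Rpower t m) (fun t => m * Rpower t (m - 1)) s (1 - g))
    as [c [Hc Hcb]].
  { lra. }
  { intros c Hc. apply derivable_pt_lim_power. lra. }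
  assert (Hsm : Rpower s m = r).
  { unfold s, m. rewrite Rpower_mult. replace (2 / nR * (nR / 2)) with 1 by (field; lra).
    apply Rpower_1; lra. }
  rewrite Hsm in Hc. fold X in Hc.
  assert (Hm1 : Rpower s (m - 1) <= Rpower c (m - 1)).
  { apply Rle_Rpower_l. unfold m; lra. lra. }
  assert (Hsm1 : Rpower s (m - 1) = Rpower r (1 - 2 / nR)).
  { unfold s. rewrite Rpower_mult. f_equal. unfold m. field. lra. }
  set (Q := Rpower r (2 - 2 / nR)).
  set (P := Rpower r (2 / nR - 2)).
  assert (HPQ : P * Q = 1).
  { unfold P, Q. rewrite <- Rpower_plus. replace (2 / nR - 2 + (2 - 2 / nR)) with 0 by ring.
    apply Rpower_O; lra. }
  assert (HQ : Q = r * Rpower r (1 - 2 / nR)).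
  { unfold Q. replace (2 - 2 / nR) with (1 + (1 - 2/nR)) by ring.
    rewrite Rpower_plus, Rpower_1; lra. }
  assert (HQ0 : 0 < Q) by apply Rpower_pos'.
  assert (Hm0 : 0 < m) by (unfold m; lra).
  assert (Hk : m * Q * (1 - s - g) <= g ^ n).
  { assert (g ^ n = r * (X - r)) by lra.
    rewrite H, Hc, HQ, <- Hsm1.
    assert (0 <= 1 - s - g) by lra.
    assert (0 <= Rpower s (m - 1)) by (left; apply Rpower_pos').
    replace (1 - g - s) with (1 - s - g) by ring.
    assert (r * (m * Rpower s (m - 1) * (1 - s - g)) <= r * (m * Rpower c (m - 1) * (1 - s - g))).
    { apply Rmult_le_compat_l; [lra|]. apply Rmult_le_compat_r; [lra|].
      apply Rmult_le_compat_l; lra. }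
    nra. }
  assert (Hgn : g ^ n <= (1 - s) ^ n) by (apply pow_incr; lra).
  replace (1 - s - g) with ((m * Q * (1 - s - g)) * (2 / nR * P)).
  2:{ unfold m. replace (nR/2*Q*(1-s-g)*(2/nR*P)) with ((P*Q)*(1-s-g)*(nR/2*(2/nR))) by ring.
      rewrite HPQ. field. lra. }
  rewrite (Rmult_comm (m*Q*(1-s-g))).
  apply Rmult_le_compat_l.
  - assert (0 < P) by apply Rpower_pos'. assert (0 < 2 / nR) by (apply Rdiv_lt_0_compat; lra). nra.
  - lra.
Qed.

Theorem proposition3 (r : R) (hr : 0 < r < 1) :
  (forall (n : nat) (g : R), (2 <= n)%nat -> is_gamma_minus r n g ->
     gamma_plus r n - g
       <= 2 / INR n * Rpower r (2 / INR n - 2) * gamma_plus r n ^ n)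
  /\
  (exists (C : R) (N : nat), forall (n : nat) (g : R),
     (N <= n)%nat -> (2 <= n)%nat -> is_gamma_minus r n g ->
     Rabs (gamma_plus r n - g)
       <= C * ((2 * ln (1 / r)) ^ n / INR n ^ (n + 1))).
Proof.
  split; [exact (part1 r hr)|].
  exists (2 / r ^ 2), 0%nat. intros n g _ hn hg.
  pose proof (part1 r hr n g hn hg) as H1.
  destruct hg as [[g0 g1] _].
  rewrite Rabs_right by lra.
  eapply Rle_trans; [exact H1|].
  assert (hnR : 2 <= INR n) by (replace 2 with (INR 2) by (simpl; ring); apply le_INR; exact hn).
  set (nR := INR n) in *.
  assert (Hlnr : ln r < 0) by (rewrite <- ln_1; apply ln_increasing; lra).
  assert (Htau : ln (1 / r) = - ln r).
  { unfold Rdiv. rewrite Rmult_1_l. apply ln_Rinv. lra. }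
  rewrite Htau.
  assert (Hs : Rpower r (2 / nR) = exp (2 / nR * ln r)) by reflexivity.
  assert (Hsle : exp (2 / nR * ln r) < 1).
  { rewrite <- exp_0. apply exp_increasing.
    assert (0 < 2 / nR) by (apply Rdiv_lt_0_compat; lra). nra. }
  assert (Hge : 1 + 2 / nR * ln r <= exp (2 / nR * ln r)) by apply exp_ineq1_le.
  assert (Hgp0 : 0 <= gamma_plus r n) by (unfold gamma_plus; fold nR; lra).
  assert (Hgp : gamma_plus r n <= 2 * - ln r / nR).
  { unfold gamma_plus; fold nR. rewrite Hs.
    replace (2 * - ln r / nR) with (- (2 / nR * ln r)) by (field; lra). lra. }
  assert (Hpow : gamma_plus r n ^ n <= (2 * - ln r) ^ n / nR ^ n).
  { unfold Rdiv. rewrite <- pow_inv, <- Rpow_mult_distr.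
    apply pow_incr. unfold Rdiv in Hgp. lra. }
  assert (HP : Rpower r (2 / nR - 2) <= / r ^ 2).
  { unfold Rminus. rewrite Rpower_plus.
    assert (Hr2 : Rpower r 2 = r ^ 2).
    { replace 2 with (INR 2) at 1 by (simpl; ring). apply Rpower_pow. lra. }
    assert (Hinv : Rpower r (- (2)) = / r ^ 2).
    { rewrite <- Hr2. unfold Rpower. rewrite <- exp_Ropp. f_equal. ring. }
    rewrite Hinv, Hs.
    assert (0 < / r ^ 2) by (apply Rinv_0_lt_compat; apply pow_lt; lra).
    nra. }
  assert (Hpos1 : 0 < 2 / nR) by (apply Rdiv_lt_0_compat; lra).
  assert (HPpos : 0 < Rpower r (2 / nR - 2)) by apply Rpower_pos'.
  assert (Hgpn : 0 <= gamma_plus r n ^ n) by (apply pow_le; lra).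
  apply Rle_trans with (2 / nR * / r ^ 2 * ((2 * - ln r) ^ n / nR ^ n)).
  - apply Rmult_le_compat.
    + nra.
    + exact Hgpn.
    + apply Rmult_le_compat_l; lra.
    + exact Hpow.
  - right. rewrite pow_add, pow_1. field. repeat split; try lra; apply pow_nonzero; lra.
Qed.
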